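(* Let $\mathcal{Q}_d,\mathcal{Q}_e,\mathcal{Q}_{\mathrm{eval}}$ be quantales with operations $\odot_d,\odot_e,\odot_{\mathrm{eval}}$, and let $\phi_d:\mathcal{Q}_d\to\mathcal{Q}_{\mathrm{eval}}$, $\phi_e:\mathcal{Q}_e\to\mathcal{Q}_{\mathrm{eval}}$ be lax functions. Then: (i) (Heterogeneous series) Let $\mathcal{R}$ be a $\mathcal{Q}_d$-category, $\mathcal{F}$ a $\mathcal{Q}_e$-category, and $\mathcal{M}$ a set of objects carrying both a $\mathcal{Q}_d$-category structure and a $\mathcal{Q}_e$-category structure; let $d:\mathcal{R}\nrightarrow_{\mathcal{Q}_d}\mathcal{M}$ be a $\mathcal{Q}_d$-design problem and $e:\mathcal{M}\nrightarrow_{\mathcal{Q}_e}\mathcal{F}$ a $\mathcal{Q}_e$-design problem. Then $(d;e)(r,f):=\bigsqcup_{m\in\mathcal{M}}\phi_d(d(r,m))\odot_{\mathrm{eval}}\phi_e(e(m,f))$ is a $\mathcal{Q}_{\mathrm{eval}}$-design problem $(\phi_d)_\ast\mathcal{R}\nrightarrow(\phi_e)_\ast\mathcal{F}$. (ii) (Heterogeneous parallel) If $d:\mathcal{R}\nrightarrow_{\mathcal{Q}_d}\mathcal{F}$ is a $\mathcal{Q}_d$-design problem and $e:\mathcal{R}'\nrightarrow_{\mathcal{Q}_e}\mathcal{F}'$ is a $\mathcal{Q}_e$-design problem, then $(d\otimes e)((r,r'),(f,f')):=\phi_d(d(r,f))\odot_{\mathrm{eval}}\phi_e(e(r',f'))$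 is a $\mathcal{Q}_{\mathrm{eval}}$-design problem $(\phi_d)_\ast\mathcal{R}\otimes(\phi_e)_\ast\mathcal{R}'\nrightarrow(\phi_d)_\ast\mathcal{F}\otimes(\phi_e)_\ast\mathcal{F}'$. (iii) (Heterogeneous feedback) If $\mathcal{R},\mathcal{F},\mathcal{M}$ are $\mathcal{Q}_d$-categories and $d:\mathcal{R}\otimes\mathcal{M}\nrightarrow_{\mathcal{Q}_d}\mathcal{F}\otimes\mathcal{M}$ is a $\mathcal{Q}_d$-design problem, then $\mathrm{Tr}_{\mathcal{M}}(d)(r,f):=\bigsqcup_{m,m'\in\mathcal{M}}\phi_d(d((r,m),(f,m')))\odot_{\mathrm{eval}}\phi_d(\mathcal{M}(m,m'))$ is a $\mathcal{Q}_{\mathrm{eval}}$-design problem $(\phi_d)_\ast\mathcal{R}\nrightarrow(\phi_d)_\ast\mathcal{F}$.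
   Context: A quantale $(Q,\sqsubseteq,\odot,e)$ is a complete lattice (arbitrary joins $\bigsqcup$) with an associative, commutative operation $\odot$ with unit $e$ distributing over arbitrary joins. A $\mathcal{Q}$-category $\mathcal{C}$ is a set $\mathrm{Ob}(\mathcal{C})$ with values $\mathcal{C}(x,y)\in Q$ such that $e\sqsubseteq\mathcal{C}(x,x)$ and $\mathcal{C}(x,y)\odot\mathcal{C}(y,z)\sqsubseteq\mathcal{C}(x,z)$. The tensor product $\mathcal{C}\otimes\mathcal{D}$ of $\mathcal{Q}$-categories has objects $\mathrm{Ob}(\mathcal{C})\times\mathrm{Ob}(\mathcal{D})$ and values $\mathcal{C}(c,c')\odot\mathcal{D}(d,d')$. A $\mathcal{Q}$-design problem $d:\mathcal{R}\nrightarrow_{\mathcal{Q}}\mathcal{F}$ between $\mathcal{Q}$-categories is a function $d:\mathrm{Ob}(\mathcal{R})\times\mathrm{Ob}(\mathcal{F})\to Q$ with $\mathcal{F}(f^\ast,f)\odot d(r,f)\odot\mathcal{R}(r,r^\ast)\sqsubseteq d(r^\ast,f^\ast)$ for all $f,f^\ast\in\mathcal{F}$, $r,r^\ast\in\mathcal{R}$. A lax function $\phi:(Q,\sqsubseteq,\odot,e)\to(Q',\sqsubseteq',\odot',e')$ is a monotone map with $\phi(q_1)\odot'\phi(q_2)\sqsubseteq'\phi(q_1\odot q_2)$ and $e'\sqsubseteq'\phi(e)$. For a $\mathcal{Q}$-category $\mathcal{C}$ and lax $\phi:\mathcal{Q}\to\mathcal{Q}'$, the pushforward $\phi_\ast\mathcal{C}$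 is the $\mathcal{Q}'$-category with the same objects and values $\phi(\mathcal{C}(x,y))$. *)

(* Defs.v *)
From Stdlib Require Import Setoid.

Set Implicit Arguments.

(* A quantale: complete lattice (arbitrary joins of subsets) with an
   associative, commutative, unital multiplication distributing over
   arbitrary joins (distribution on the left suffices by commutativity). *)
Record quantale := Quantale {
  qcar :> Type;
  qle : qcar -> qcar -> Prop;
  qle_refl : forall x, qle x x;
  qle_trans : forall x y z, qle x y -> qle y z -> qle x z;
  qle_antisym : forall x y, qle x y -> qle y x -> x = y;
  qsup : (qcar -> Prop) -> qcar;
  qsup_ub : forall (S : qcar -> Prop) x, S x -> qle x (qsup S);
  qsup_least : forall (S : qcar -> Prop) y,
      (forall x, S x -> qle x y) -> qle (qsup S) y;
  qmul : qcar -> qcar -> qcar;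
  qunit : qcar;
  qmulA : forall x y z, qmul x (qmul y z) = qmul (qmul x y) z;
  qmulC : forall x y, qmul x y = qmul y x;
  qmul1 : forall x, qmul qunit x = x;
  qmul_sup : forall a (S : qcar -> Prop),
      qmul a (qsup S) = qsup (fun y => exists x, S x /\ y = qmul a x)
}.

Arguments qle {q}.
Arguments qsup {q}.
Arguments qmul {q}.
Arguments qunit {q}.
Arguments qmulC {q}.
Arguments qmulA {q}.
Arguments qmul1 {q}.

Definition qjoin (Q : quantale) (I : Type) (f : I -> Q) : Q :=
  qsup (fun q => exists i, q = f i).

Lemma qmul_monor (Q : quantale) (c a b : Q) :
  qle a b -> qle (qmul c a) (qmul c b).
Proof.
  intro Hab.
  set (S := fun x : Q => x = a \/ x = b).
  assert (HS : qsup S = b).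
  { apply qle_antisym.
    - apply qsup_least. intros x [->| ->]; [exact Hab | apply qle_refl].
    - apply qsup_ub. right; reflexivity. }
  rewrite <- HS, qmul_sup. apply qsup_ub. exists a. split; [left; reflexivity | reflexivity].
Qed.

Lemma qmul_mono (Q : quantale) (a b c d : Q) :
  qle a b -> qle c d -> qle (qmul a c) (qmul b d).
Proof.
  intros H1 H2. apply qle_trans with (qmul a d).
  - apply qmul_monor; exact H2.
  - rewrite (qmulC a), (qmulC b). apply qmul_monor; exact H1.
Qed.

Record qcat (Q : quantale) (X : Type) := QCat {
  hom :> X -> X -> Q;
  hom_refl : forall x, qle qunit (hom x x);
  hom_trans : forall x y z, qle (qmul (hom x y) (hom y z)) (hom x z)
}.

Definition lax (Q Q' : quantale) (phi : Q -> Q') : Prop :=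
  (forall a b, qle a b -> qle (phi a) (phi b)) /\
  (forall a b, qle (qmul (phi a) (phi b)) (phi (qmul a b))) /\
  qle qunit (phi qunit).

Arguments lax {Q Q'} phi.

Definition pushforward (Q Q' : quantale) (phi : Q -> Q') (Hphi : lax phi)
  (X : Type) (C : qcat Q X) : qcat Q' X.
Proof.
  refine (@QCat Q' X (fun x y => phi (C x y)) _ _).
  - intro x. destruct Hphi as [Hm [_ Hu]].
    eapply qle_trans; [exact Hu | apply Hm, hom_refl].
  - intros x y z. destruct Hphi as [Hm [Hl _]].
    eapply qle_trans; [apply Hl | apply Hm, hom_trans].
Defined.

Lemma qmul_swap (Q : quantale) (a b c d : Q) :
  qmul (qmul a b) (qmul c d) = qmul (qmul a c) (qmul b d).
Proof.
  rewrite <- !qmulA. f_equal. rewrite !qmulA. f_equal. apply qmulC.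
Qed.

Definition tensor (Q : quantale) (X Y : Type) (C : qcat Q X) (D : qcat Q Y)
  : qcat Q (X * Y).
Proof.
  refine (@QCat Q (X * Y) (fun p q => qmul (C (fst p) (fst q)) (D (snd p) (snd q))) _ _).
  - intro p. rewrite <- (qmul1 (qunit : Q)) at 1.
    apply qmul_mono; apply hom_refl.
  - intros p q r. rewrite qmul_swap. apply qmul_mono; apply hom_trans.
Defined.

Definition design_problem (Q : quantale) (R F : Type)
  (CR : qcat Q R) (CF : qcat Q F) (d : R -> F -> Q) : Prop :=
  forall (f fs : F) (r rs : R),
    qle (qmul (qmul (CF fs f) (d r f)) (CR r rs)) (d rs fs).

Arguments qjoin {Q I} f.
Arguments design_problem {Q R F} CR CF d.
Arguments pushforward {Q Q' phi} Hphi {X} C.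
Arguments tensor {Q X Y} C D.

(* Main.v *)
Require Import Defs.

Lemma le_join (Q : quantale) (I : Type) (f : I -> Q) x i :
  qle x (f i) -> qle x (qjoin f).
Proof. intro H. eapply qle_trans; [exact H|]. apply qsup_ub. exists i; reflexivity. Qed.

Lemma mul_join_le (Q : quantale) (I : Type) (f : I -> Q) c y :
  (forall i, qle (qmul c (f i)) y) -> qle (qmul c (qjoin f)) y.
Proof.
  intro H. unfold qjoin. rewrite qmul_sup. apply qsup_least.
  intros x [z [[i ->] ->]]. apply H.
Qed.

Lemma ac1 (Q : quantale) (a x b : Q) : qmul (qmul a x) b = qmul (qmul a b) x.
Proof. rewrite <- !qmulA. f_equal. apply qmulC. Qed.

Lemma sand_join_le (Q : quantale) (I : Type) (f : I -> Q) a b y :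
  (forall i, qle (qmul (qmul a (f i)) b) y) -> qle (qmul (qmul a (qjoin f)) b) y.
Proof.
  intro H. rewrite ac1. apply mul_join_le. intro i. rewrite <- ac1. apply H.
Qed.

Lemma rearr1 (Q : quantale) (a b c d : Q) :
  qmul (qmul a (qmul b c)) d = qmul (qmul a c) (qmul b d).
Proof. rewrite (qmulC b c), qmulA, <- qmulA. reflexivity. Qed.

Lemma rearr3 (Q : quantale) (a b c d : Q) :
  qmul (qmul a (qmul b c)) d = qmul (qmul (qmul a b) d) c.
Proof. rewrite qmulA. apply ac1. Qed.

Lemma rearr2 (Q : quantale) (x1 y1 x2 y2 x3 y3 : Q) :
  qmul (qmul (qmul x1 y1) (qmul x2 y2)) (qmul x3 y3) =
  qmul (qmul (qmul x1 x2) x3) (qmul (qmul y1 y2) y3).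
Proof. rewrite (qmul_swap _ x1 y1 x2 y2). apply qmul_swap. Qed.

Lemma le_mul_unit (Q : quantale) (x u : Q) : qle qunit u -> qle x (qmul x u).
Proof.
  intro H. rewrite <- (qmul1 x) at 1. rewrite qmulC. apply qmul_monor; exact H.
Qed.

Lemma le_unit_mul (Q : quantale) (x u : Q) : qle qunit u -> qle x (qmul u x).
Proof. intro H. rewrite qmulC. apply le_mul_unit; exact H. Qed.

Lemma lax2 {Q Q' : quantale} {phi : Q -> Q'} (H : lax phi) a b c :
  qle (qmul a b) c -> qle (qmul (phi a) (phi b)) (phi c).
Proof.
  destruct H as [Hm [Hl _]]. intro Hc. eapply qle_trans; [apply Hl|]. apply Hm, Hc.
Qed.

Lemma lax3 {Q Q' : quantale} {phi : Q -> Q'} (H : lax phi) a b c d :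
  qle (qmul (qmul a b) c) d -> qle (qmul (qmul (phi a) (phi b)) (phi c)) (phi d).
Proof.
  intro Hd. pose proof H as [Hm [Hl _]]. eapply qle_trans.
  - apply qmul_mono; [apply Hl | apply qle_refl].
  - apply (lax2 H). exact Hd.
Qed.

Theorem theorem2 (Qd Qe Qeval : quantale)
  (phid : Qd -> Qeval) (phie : Qe -> Qeval)
  (Hd : lax phid) (He : lax phie) :
  (* (i) heterogeneous series *)
  (forall (R F M : Type) (CR : qcat Qd R) (CF : qcat Qe F)
          (CMd : qcat Qd M) (CMe : qcat Qe M)
          (d : R -> M -> Qd) (e : M -> F -> Qe),
      design_problem CR CMd d -> design_problem CMe CF e ->
      design_problem (pushforward Hd CR) (pushforward He CF)
        (fun r f => qjoin (fun m : M => qmul (phid (d r m)) (phie (e m f))))) /\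
  (* (ii) heterogeneous parallel *)
  (forall (R F R' F' : Type) (CR : qcat Qd R) (CF : qcat Qd F)
          (CR' : qcat Qe R') (CF' : qcat Qe F')
          (d : R -> F -> Qd) (e : R' -> F' -> Qe),
      design_problem CR CF d -> design_problem CR' CF' e ->
      design_problem (tensor (pushforward Hd CR) (pushforward He CR'))
                     (tensor (pushforward Hd CF) (pushforward He CF'))
        (fun rr ff => qmul (phid (d (fst rr) (fst ff))) (phie (e (snd rr) (snd ff))))) /\
  (* (iii) heterogeneous feedback *)
  (forall (R F M : Type) (CR : qcat Qd R) (CF : qcat Qd F) (CM : qcat Qd M)
          (d : R * M -> F * M -> Qd),
      design_problem (tensor CR CM) (tensor CF CM) d ->
      design_problem (pushforward Hd CR) (pushforward Hd CF)
        (fun r f => qjoin (fun mm : M * M =>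
           qmul (phid (d (r, (fst mm)) (f, (snd mm)))) (phid (CM (fst mm) (snd mm)))))).
Proof.
  split; [|split].
  - intros R F M CR CF CMd CMe d e Hdp Hep f fs r rs. simpl.
    apply sand_join_le. intro m. apply (le_join _ _ _ _ m).
    rewrite rearr1, (qmulC (qmul (phie _) (phie _))). apply qmul_mono.
    + apply (lax2 Hd). eapply qle_trans; [|apply (Hdp m m r rs)].
      apply qmul_mono; [apply le_unit_mul, hom_refl | apply qle_refl].
    + apply (lax2 He). eapply qle_trans; [|apply (Hep f fs m m)].
      apply le_mul_unit, hom_refl.
  - intros R F R' F' CR CF CR' CF' d e Hdp Hep f fs r rs. simpl.
    rewrite rearr2. apply qmul_mono.
    + apply (lax3 Hd). apply Hdp.
    + apply (lax3 He). apply Hep.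
  - intros R F M CR CF CM d Hdp f fs r rs. simpl.
    apply sand_join_le. intros [m m']. simpl. apply (le_join _ _ _ _ (m, m')). simpl.
    rewrite rearr3. apply qmul_mono; [|apply qle_refl].
    apply (lax3 Hd).
    eapply qle_trans; [|apply (Hdp (f, m') (fs, m') (r, m) (rs, m))]. simpl.
    apply qmul_mono; [apply qmul_mono|].
    + apply le_mul_unit, hom_refl.
    + apply qle_refl.
    + apply le_mul_unit, hom_refl.
Qed.
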